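(* Let $\mathcal A$ be an NBA such that (1) $\sqsubseteq^{\mathrm{di}}\cap\sqsupseteq^{\mathrm{di}}=\mathrm{id}$, (2) $\sqsubseteq^{\mathrm{bw\text{-}di}}\cap\sqsupseteq^{\mathrm{bw\text{-}di}}=\mathrm{id}$, and (3) $\sqsubseteq^{\mathrm{di}}\cap\sqsubseteq^{\mathrm{bw\text{-}di}}=\mathrm{id}$. Then $\sqsubseteq^{\mathrm m}\cap\sqsupseteq^{\mathrm m}=\mathrm{id}$; in particular $\mathcal A/\!\sqsubseteq^{\mathrm m}$ is isomorphic to $\mathcal A$.
   Context: An NBA $\mathcal A=(\Sigma,Q,I,F,\delta)$ is assumed forward and backward complete. Direct simulation $\sqsubseteq^{\mathrm{di}}$: in the game from $(p_0,q_0)$, at round $i$ Spoiler picks $p_i\xrightarrow{\sigma_i}p_{i+1}$, Duplicator answers $q_i\xrightarrow{\sigma_i}q_{i+1}$; Duplicator wins if $p_i\in F\Rightarrow q_i\in F$ for all $i$. Backward direct simulation $\sqsubseteq^{\mathrm{bw\text{-}di}}$: same but with backward transitions $p_{i+1}\xrightarrow{\sigma_i}p_i$, $q_{i+1}\xrightarrow{\sigma_i}q_i$, and Duplicator wins if for all $i$, $p_i\in F\Rightarrow q_i\in F$ and $p_i\in I\Rightarrow q_i\in I$. In both cases $p\sqsubseteq q$ iff Duplicator has a winning strategy from $(p,q)$; these are preorders; $\sqsupseteq$ denotes the inverse relation. For relations $A,B$, $(x,y)\in A\circ B$ iff $\exists z$ with $(x,z)\in A$, $(z,y)\in B$. A relation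 $M\subseteq Q\times Q$ is a mediated simulation if $M\subseteq\ \sqsubseteq^{\mathrm{di}}\circ\sqsupseteq^{\mathrm{bw\text{-}di}}$ and $M\circ\sqsubseteq^{\mathrm{di}}\ \subseteq M$; $\sqsubseteq^{\mathrm m}$ is the union of all mediated simulations (itself a mediated simulation). $\mathrm{id}$ is the identity relation; quotient by a preorder merges its equivalence classes. *)

(* Defs.v *)
From mathcomp Require Import all_boot.
Set Implicit Arguments. Unset Strict Implicit. Unset Printing Implicit Defensive.

Record NBA (Sigma Q : finType) := {
  init : {set Q};
  acc : {set Q};
  delta : Q -> Sigma -> Q -> bool  (* delta p a q : transition p --a--> q *)
}.

Definition forward_complete (Sigma Q : finType) (A : NBA Sigma Q) : Prop :=
  forall (p : Q) (a : Sigma), exists q, delta A p a q.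
Definition backward_complete (Sigma Q : finType) (A : NBA Sigma Q) : Prop :=
  forall (q : Q) (a : Sigma), exists p, delta A p a q.

(* R is a direct-simulation relation: a positional winning region for Duplicator
   in the direct simulation game (safety game). *)
Definition is_di_sim (Sigma Q : finType) (A : NBA Sigma Q) (R : Q -> Q -> Prop) :=
  forall p q, R p q ->
    (p \in acc A -> q \in acc A) /\
    forall (a : Sigma) (p' : Q), delta A p a p' ->
      exists2 q', delta A q a q' & R p' q'.

Definition is_bwdi_sim (Sigma Q : finType) (A : NBA Sigma Q) (R : Q -> Q -> Prop) :=
  forall p q, R p q ->
    (p \in acc A -> q \in acc A) /\ (p \in init A -> q \in init A) /\
    forall (a : Sigma) (p' : Q), delta A p' a p ->
      exists2 q', delta A q' a q & R p' q'.

Definition di_sim (Sigma Q : finType) (A : NBA Sigma Q) (p q : Q) : Prop :=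
  exists R, is_di_sim A R /\ R p q.
Definition bwdi_sim (Sigma Q : finType) (A : NBA Sigma Q) (p q : Q) : Prop :=
  exists R, is_bwdi_sim A R /\ R p q.

Definition is_mediated_sim (Sigma Q : finType) (A : NBA Sigma Q) (M : Q -> Q -> Prop) :=
  (forall x y, M x y -> exists z, di_sim A x z /\ bwdi_sim A y z) /\
  (forall x y z, M x z -> di_sim A z y -> M x y).

Definition med_sim (Sigma Q : finType) (A : NBA Sigma Q) (p q : Q) : Prop :=
  exists M, is_mediated_sim A M /\ M p q.

(* Main.v *)
Require Import Defs.
From mathcomp Require Import all_boot.

Lemma di_trans (Sigma Q : finType) (A : NBA Sigma Q) x y z :
  di_sim A x y -> di_sim A y z -> di_sim A x z.
Proof.
move=> [R1 [H1 r1]] [R2 [H2 r2]].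
exists (fun a c => exists b, R1 a b /\ R2 b c); split; last by exists y.
move=> a c [b [ab bc]].
have [h1 k1] := H1 _ _ ab; have [h2 k2] := H2 _ _ bc.
split; first by move=> /h1 /h2.
move=> s a' d; have [b' d1 r1'] := k1 _ _ d; have [c' d2 r2'] := k2 _ _ d1.
by exists c' => //; exists b'.
Qed.

Lemma bw_trans (Sigma Q : finType) (A : NBA Sigma Q) x y z :
  bwdi_sim A x y -> bwdi_sim A y z -> bwdi_sim A x z.
Proof.
move=> [R1 [H1 r1]] [R2 [H2 r2]].
exists (fun a c => exists b, R1 a b /\ R2 b c); split; last by exists y.
move=> a c [b [ab bc]].
have [h1 [i1 k1]] := H1 _ _ ab; have [h2 [i2 k2]] := H2 _ _ bc.
split; first by move=> /h1 /h2.
split; first by move=> /i1 /i2.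
move=> s a' d; have [b' d1 r1'] := k1 _ _ d; have [c' d2 r2'] := k2 _ _ d1.
by exists c' => //; exists b'.
Qed.

Lemma bw_refl (Sigma Q : finType) (A : NBA Sigma Q) x : bwdi_sim A x x.
Proof.
exists (fun a b => a = b); split => //.
move=> a b <-; split => //; split => // s a' d; by exists a'.
Qed.

Lemma med_step (Sigma Q : finType) (A : NBA Sigma Q) p q b :
  med_sim A p q -> di_sim A q b -> exists c, di_sim A p c /\ bwdi_sim A b c.
Proof.
move=> [M [[H1 H2] m]] qb; apply: H1; exact: H2 qb.
Qed.

Theorem lemma7p2 (Sigma Q : finType) (A : NBA Sigma Q) :
  forward_complete A -> backward_complete A ->
  (forall p q, di_sim A p q -> di_sim A q p -> p = q) ->
  (forall p q, bwdi_sim A p q -> bwdi_sim A q p -> p = q) ->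
  (forall p q, di_sim A p q -> bwdi_sim A p q -> p = q) ->
  forall p q, (med_sim A p q /\ med_sim A q p) <-> p = q.
Proof.
move=> _ _ Adi Abw Amix p q; split.
  have key : forall x y, med_sim A x y -> med_sim A y x -> di_sim A y x.
    move=> x y mxy myx.
    have [M [[H1 _] m]] := myx.
    have [b [yb xb]] := H1 _ _ m.
    have [c [xc bc]] := @med_step _ _ A _ _ _ mxy yb.
    have xc' : bwdi_sim A x c by exact: bw_trans xb bc.
    have ec := Amix _ _ xc xc'; subst c.
    by have e := Abw _ _ xb bc; rewrite e.
  by move=> [h1 h2]; apply: Adi; [apply: key h2 h1 | apply: key h1 h2].
move=> <-; have hm : med_sim A p p; last by split.
exists (fun a b => di_sim A a b); split; last first.
- exists (fun a b => a = b); split => //.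
  by move=> a b <-; split => // s a' d; exists a'.
- split; first by move=> x y h; exists y; split => //; exact: bw_refl.
  by move=> x y z h1 h2; exact: di_trans h1 h2.
Qed.
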